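(* Let $P$ be a matrix as in the context, with column index set $\mathcal{F}$. Let $A\subseteq\mathcal{F}$ with $|A|=r+1$, $\det(P_A)\neq0$ and $A\cap\mathcal{F}'=\emptyset$. Then one of the following holds: (i) $|A\cap\mathcal{F}_i|=1$ for all $i=0,\dots,r$, and $|\det(P_A)|=|\mu(j_0,\dots,j_r)|$ for some numbers $1\le j_i\le n_i$; (ii) there exist $0\le i_0,i_1\le r$ with $|A\cap\mathcal{F}_{i_0}|=2$, $|A\cap\mathcal{F}_{i_1}|=0$ and $|A\cap\mathcal{F}_i|=1$ for all other $i$, and $|\det(P_A)|=|\nu(i_0,j_{i_0},j'_{i_0})|\prod_{i\neq i_0,i_1}l_{ij_i}$ for some numbers $1\le j_i\le n_i$ and $1\le j'_{i_0}\le n_{i_0}$.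
   Context: Fix integers $r\ge1$, $n_0,\dots,n_r\ge1$, vectors $l_i\in\mathbb{Z}_{\ge1}^{n_i}$, $d_i\in\mathbb{Z}^{n_i}$ with $\gcd(l_{ij},d_{ij})=1$ and $d_{i1}/l_{i1}>\dots>d_{in_i}/l_{in_i}$. Let $e_1,\dots,e_{r+1}$ be the standard basis of $\mathbb{Z}^{r+1}$, $u=e_{r+1}$, $e_0=-(e_1+\dots+e_r)$, $v_{ij}=l_{ij}e_i+d_{ij}u$. Let $\mathcal{F}_i=\{f_{i1},\dots,f_{in_i}\}$, $\mathcal{F}'$ one of $\emptyset,\{f^+\},\{f^-\},\{f^+,f^-\}$ (types (ee),(pe),(ep),(pp)), $\mathcal{F}=\mathcal{F}_0\cup\dots\cup\mathcal{F}_r\cup\mathcal{F}'$, and $P$ the $(r+1)\times|\mathcal{F}|$ matrix with column $v_{ij}$ at $f_{ij}$, $u$ at $f^+$, $-u$ at $f^-$. For $|A|=r+1$, $P_A$ is the square submatrix of columns indexed by $A$. Define $\mu(j_0,\dots,j_r)=\sum_{i_0=0}^r d_{i_0j_{i_0}}\prod_{i\ne i_0}l_{ij_i}$ and $\nu(i,j,j')=l_{ij}d_{ij'}-l_{ij'}d_{ij}$. *)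

(* Defs.v *)
From HB Require Import structures.
From mathcomp Require Import all_boot all_order all_algebra.
Set Implicit Arguments. Unset Strict Implicit. Unset Printing Implicit Defensive.
Import Order.TTheory GRing.Theory Num.Theory.
Local Open Scope ring_scope.

(* Coordinates of Z^{r+1} are indexed by 'I_(r.+1): coordinate k (k < r)
   is the coefficient of e_{k+1}, coordinate r (= ord_max) is that of u.
   Rays f_{ij} are indexed by {i : 'I_(r.+1) & 'I_(n i)} (j is 0-based),
   f^+ is inr true, f^- is inr false. *)

Definition colT (r : nat) (n : 'I_r.+1 -> nat) : finType :=
  ({i : 'I_r.+1 & 'I_(n i)} + bool)%type.

Definition Fset (r : nat) (n : 'I_r.+1 -> nat) (S : {set bool}) : {set colT n} :=
  [set x : colT n | if x is inr b then b \in S else true].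

Definition Fprime (r : nat) (n : 'I_r.+1 -> nat) (S : {set bool}) : {set colT n} :=
  [set x : colT n | if x is inr b then b \in S else false].

Definition Fblock (r : nat) (n : 'I_r.+1 -> nat) (i : 'I_r.+1) : {set colT n} :=
  [set x : colT n | if x is inl p then tag p == i else false].

Definition Pcol (r : nat) (n : 'I_r.+1 -> nat)
  (l d : forall i : 'I_r.+1, 'I_(n i) -> int) (x : colT n) (a : 'I_r.+1) : int :=
  match x with
  | inl p =>
      if a == ord_max then d (tag p) (tagged p)
      else if tag p == ord0 then - l (tag p) (tagged p)
      else if val (tag p) == (val a).+1 then l (tag p) (tagged p) else 0
  | inr b => if a == ord_max then (if b then 1 else -1) else 0
  end.

(* P_A : columns indexed by the elements of A (in the enumeration order of A;
   only |det| is used, so the order is irrelevant) *)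
Definition PA (r : nat) (n : 'I_r.+1 -> nat)
  (l d : forall i : 'I_r.+1, 'I_(n i) -> int) (A : {set colT n}) : 'M[int]_(r.+1) :=
  \matrix_(a < r.+1, k < r.+1) Pcol l d (nth (inr true) (enum A) k) a.

Definition mu (r : nat) (n : 'I_r.+1 -> nat)
  (l d : forall i : 'I_r.+1, 'I_(n i) -> int) (j : forall i : 'I_r.+1, 'I_(n i)) : int :=
  \sum_(i0 < r.+1) d i0 (j i0) * \prod_(i < r.+1 | i != i0) l i (j i).

Definition nu (r : nat) (n : 'I_r.+1 -> nat)
  (l d : forall i : 'I_r.+1, 'I_(n i) -> int) (i : 'I_r.+1) (j j' : 'I_(n i)) : int :=
  l i j * d i j' - l i j' * d i j.

(* Main.v *)
Require Import Defs.
From HB Require Import structures.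
From mathcomp Require Import all_boot all_order all_algebra.
From mathcomp Require Import perm zify ring lra.
Import Order.TTheory GRing.Theory Num.Theory.
Local Open Scope ring_scope.

Section Helpers.
Local Set Implicit Arguments.
Local Unset Strict Implicit.

Lemma ML (R : comPzRingType) n (A : 'M[R]_n) k (a : 'I_n -> R) :
  \det (\matrix_(i, j) if i == k then \sum_m a m * A m j else A i j) = a k * \det A.
Proof.
rewrite (expand_det_row _ k).
have cof : forall j, cofactor (\matrix_(i, j) if i == k then \sum_m a m * A m j else A i j) k j
   = cofactor A k j.
  move=> j; rewrite /cofactor; congr (_ * \det _); apply/matrixP => i' j'.
  by rewrite !mxE eq_sym (negbTE (neq_lift k i')).
under eq_bigr => j _ do rewrite cof mxE eqxx big_distrl /=.
rewrite exchange_big /=.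
have key : forall m, \sum_j a m * A m j * cofactor A k j = a m * (\det A *+ (m == k)).
  move=> m; have /matrixP/(_ m k) := mul_mx_adj A; rewrite !mxE => <-.
  by rewrite big_distrr /=; apply: eq_bigr => j _; rewrite mxE mulrA.
under eq_bigr => m _ do rewrite key.
rewrite (bigD1 k) //= big1 ?addr0 ?eqxx ?mulr1n //.
by move=> m hm; rewrite (negbTE hm) mulr0n mulr0.
Qed.


Definition eps2 r (i a : 'I_r.+1) : int :=
  if i == ord0 then -1 else if val i == (val a).+1 then 1 else 0.

Lemma Lperm r (g : 'I_r -> 'I_r.+1) : injective g -> (forall k, g k != ord0) ->
  `|\det (\matrix_(k, a) (if val (g k) == (val a).+1 then 1 else 0 : int))| = 1.
Proof.
move=> ginj g0.
have gp : forall k, (0 < val (g k))%N.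
  by move=> k; rewrite lt0n; apply: contra (g0 k) => /eqP e; apply/eqP/val_inj.
pose s (k : 'I_r) : 'I_r := insubd k (val (g k)).-1.
have vs : forall k, val (s k) = (val (g k)).-1.
  move=> k; rewrite val_insubd; case: ifP => // /negbT; rewrite -leqNgt.
  have : (val (g k) < r.+1)%N := ltn_ord (g k). have := gp k; lia.
have sinj : injective s.
  move=> k1 k2 /(congr1 val); rewrite !vs => e; apply: ginj; apply: val_inj.
  have := gp k1; have := gp k2; lia.
have -> : (\matrix_(k, a) (if val (g k) == (val a).+1 then 1 else 0 : int)) = perm_mx (perm sinj).
  apply/matrixP => k a; rewrite !mxE permE -(inj_eq val_inj) vs /=.
  case: (g k) (gp k) => [[|x] hx] //= _; rewrite eqSS; by case: eqP.
have := @det_perm int _ (perm sinj); move=> ->; exact: normr_sign.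
Qed.

Lemma L2 r (c : 'I_r -> 'I_r.+1) : injective c ->
  `|\det (\matrix_(k, a) eps2 (c k) (lift ord_max a))| = 1.
Proof.
move=> cinj.
have vl : forall a : 'I_r, val (lift ord_max a) = val a by move=> a; exact: lift_max.
case: (boolP [exists k, c k == ord0]) => [/existsP [k0' /eqP ck0'] | /existsPn nc0]; last first.
  rewrite -(Lperm cinj nc0); congr (`| \det _ |); apply/matrixP => k a.
  by rewrite !mxE /eps2 (negbTE (nc0 k)) vl.
have [k0 ck0] : exists k0 : 'I_r, c k0 = ord0 by exists k0'.
clear k0' ck0'.
pose S := [set c k | k : 'I_r].
have : ~~ ([set: 'I_r.+1] \subset S).
  apply/negP => /subset_leq_card; rewrite cardsT card_ord card_imset //.
  by rewrite card_ord ltnn.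
case/subsetPn => im _ him.
have inS : forall b, b != im -> b \in S.
  have : S == [set~ im].
    rewrite eqEcard cardsC1 card_ord card_imset // card_ord leqnn andbT.
    apply/subsetP => x; rewrite !inE; apply: contraTneq => ->; exact: him.
  by move=> /eqP -> b; rewrite !inE.
have im0 : im != ord0 by apply: contraNneq him => ->; rewrite -ck0; apply: imset_f.
pose g k := if k == k0 then im else c k.
have cn0 : forall k, k != k0 -> c k != ord0.
  by move=> k; apply: contra => /eqP; rewrite -ck0 => /cinj ->.
have gn0 : forall k, g k != ord0.
  by move=> k; rewrite /g; case: ifP => [_|/negbT h]; [exact: im0 | exact: cn0].
have ginj : injective g.
  have cim : forall k, c k != im by move=> k; apply: contraNneq him => <-; apply: imset_f.
  move=> k1 k2; rewrite /g; case: eqP => [->|/eqP h1]; case: eqP => [->|/eqP h2] //.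
  - by move=> e; move: (cim k2); rewrite e eqxx.
  - by move=> e; move: (cim k1); rewrite e eqxx.
  - exact: cinj.
set X := \matrix_(k, a) eps2 (c k) (lift ord_max a).
have e1 := ML X k0 (fun _ => 1).
set X1 := \matrix_(i, j) _ in e1.
have e2 := ML X1 k0 (fun m => if m == k0 then -1 else 0).
set X2 := \matrix_(i, j) _ in e2.
rewrite mul1r in e1; rewrite eqxx mulN1r e1 in e2.
rewrite -normrN -e2 -(Lperm ginj gn0); congr (`| \det _ |); apply/matrixP => i j.
rewrite !mxE /g; case: (boolP (i == k0)) => [/eqP ei|hi]; last first.
  by rewrite /eps2 (negbTE (cn0 _ hi)) vl.
subst i; rewrite (bigD1 k0) //= big1 ?addr0; last first.
  by move=> m /negbTE hm; rewrite hm mul0r.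
rewrite !mxE eqxx mulN1r.
under eq_bigr => m _ do rewrite mul1r !mxE.
rewrite (bigD1 k0) //= {1}/eps2 ck0 eqxx.
pose b : 'I_r.+1 := lift ord0 j.
have vb : val b = (val j).+1 by exact: lift0.
have -> : \sum_(m | m != k0) eps2 (c m) (lift ord_max j) = \sum_(m | m != k0) ((c m == b) : int).
  apply: eq_bigr => m hm; rewrite /eps2 (negbTE (cn0 _ hm)) vl -vb.
  by rewrite (inj_eq val_inj); case: (c m == b).
case: (eqVneq b im) => [ebm|nbm].
  rewrite big1; last by move=> m _; rewrite ebm; case: eqP => // e; move: him; rewrite -e imset_f.
  by rewrite -vb ebm eqxx addr0 opprK.
have := inS _ nbm; case/imsetP => m1 _ em1.
have m1k0 : m1 != k0.
  apply: contraTneq isT => e; have := ck0; rewrite -e -em1 => /(congr1 val); rewrite vb.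
  done.
rewrite (bigD1 m1) //= -em1 eqxx big1 ?addr0; last first.
  move=> m /andP [_ hm]; rewrite em1 (inj_eq cinj) (negbTE hm) //.
have : val im != (val j).+1.
  by rewrite -vb; apply: contra nbm => /eqP e; apply/eqP/val_inj.
move/negbTE ->; by rewrite addNr oppr0.
Qed.


Definition Q r (i : 'I_r.+1) (x y : int) (a : 'I_r.+1) : int :=
  if a == ord_max then y else if i == ord0 then - x
  else if val i == (val a).+1 then x else 0.

Definition Tm r (c : 'I_r.+1 -> 'I_r.+1) (lv dv : 'I_r.+1 -> int) : 'M[int]_r.+1 :=
  \matrix_(k, a) Q (c k) (lv k) (dv k) a.

Lemma Qeps r (i a : 'I_r.+1) x y : a != ord_max -> Q i x y a = x * eps2 i a.
Proof.
move=> /negbTE h; rewrite /Q /eps2 h; case: (i == ord0); first by rewrite mulrN1.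
by case: (_ == _); rewrite ?mulr1 ?mulr0.
Qed.

Lemma KR r (T : 'M[int]_r.+1) k0 : (forall j, T k0 j = (j == ord_max)%:R) ->
  \det T = (-1) ^+ (k0 + r) * \det (\matrix_(k, a) T (lift k0 k) (lift ord_max a)).
Proof.
move=> hT; rewrite (expand_det_row _ k0) (bigD1 ord_max) //= big1 ?addr0; last first.
  by move=> j /negbTE hj; rewrite hT hj mul0r.
rewrite hT eqxx mul1r /cofactor; congr (_ ^+ _ * \det _).
by apply/matrixP => k a; rewrite !mxE.
Qed.

Lemma Gcore r (c : 'I_r.+1 -> 'I_r.+1) lv dv k0 (w : 'I_r.+1 -> int) z :
  (forall j, j != ord_max -> \sum_m w m * Q (c m) (lv m) (dv m) j = 0) ->
  \sum_m w m * dv m = z ->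
  injective (fun k => c (lift k0 k)) ->
  `|w k0 * \det (Tm c lv dv)| = `|z| * `|\prod_(k < r) lv (lift k0 k)|.
Proof.
move=> h0 hz cinj.
set T := Tm c lv dv.
have e1 := ML T k0 w.
set C := \matrix_(i, j) if i == k0 then ((j == ord_max)%:R : int) else T i j.
have e2 := ML C k0 (fun m => if m == k0 then z else 0).
rewrite eqxx in e2.
rewrite -e1.
have -> : (\matrix_(i, j) (if i == k0 then \sum_m w m * T m j else T i j))
  = (\matrix_(i, j) (if i == k0 then \sum_m (if m == k0 then z else 0) * C m j else C i j)).
  apply/matrixP => i j; rewrite !mxE; case: ifP => // _.
  rewrite [RHS](bigD1 k0) //= [X in _ + X]big1 ?addr0; last first.
    by move=> m; case: eqP => //= _ _; rewrite mul0r.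
  rewrite mxE !eqxx; case: (boolP (j == ord_max)) => [/eqP ->|hj].
    rewrite mulr1 -hz /T. apply: eq_big => // m _; by rewrite mxE /Q eqxx.
  rewrite mulr0 -[RHS](h0 j hj) /T; apply: eq_big => // m _; by rewrite mxE.
rewrite e2 normrM; congr (_ * _).
rewrite (KR (k0:=k0)); last by move=> j; rewrite mxE eqxx.
rewrite normrM normr_sign mul1r.
have -> : (\matrix_(k, a) C (lift k0 k) (lift ord_max a)) =
   diag_mx (\row_k lv (lift k0 k)) *m \matrix_(k, a) eps2 (c (lift k0 k)) (lift ord_max a).
  apply/matrixP => k a; rewrite mul_diag_mx !mxE.
  case: ifP => [/eqP e|_]; first by move: (neq_lift k0 k); rewrite -{1}e eqxx.
  by rewrite Qeps // eq_sym neq_lift.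
by rewrite det_mulmx det_diag normrM (L2 cinj) mulr1; under eq_bigr => k _ do rewrite mxE.
Qed.


Lemma prod_lift r (F : 'I_r.+1 -> int) k0 :
  \prod_(m | m != k0) F m = \prod_(k < r) F (lift k0 k).
Proof.
rewrite (reindex_omap (lift k0) (unlift k0)) /=; last first.
  by move=> i; case: unliftP => [k ->|->]; rewrite ?eqxx.
by apply: eq_bigl => k; rewrite liftK eq_sym neq_lift eqxx.
Qed.

Lemma sum_eps2 r (j : 'I_r.+1) : j != ord_max -> \sum_i eps2 i j = 0.
Proof.
move=> hj.
have jr : (val j < r)%N.
  have := ltn_ord j; rewrite ltnS leq_eqVlt => /orP [/eqP e|//].
  by move: hj; rewrite -(inj_eq val_inj) /= e eqxx.
pose b : 'I_r.+1 := inord (val j).+1.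
have vb : val b = (val j).+1 by apply: inordK; rewrite ltnS.
rewrite (bigD1 ord0) //= {1}/eps2 eqxx.
have b0 : b != ord0 by rewrite -(inj_eq val_inj) vb.
rewrite (bigD1 b) //= {1}/eps2 (negbTE b0) vb eqxx big1 ?addr0 ?addNr //.
move=> i /andP [i0 ib]; rewrite /eps2 (negbTE i0) -vb (inj_eq val_inj) (negbTE ib) //.
Qed.

Lemma G1 r (c : 'I_r.+1 -> 'I_r.+1) lv dv : injective c -> (forall k, lv k != 0) ->
  `|\det (Tm c lv dv)| = `|\sum_k dv k * \prod_(m | m != k) lv m|.
Proof.
move=> cinj lv0.
pose w k := \prod_(m | m != k) lv m.
have cinj' : injective (fun k => c (lift ord0 k)) by move=> x y /cinj /lift_inj.
have h0 : forall j, j != ord_max -> \sum_m w m * Q (c m) (lv m) (dv m) j = 0.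
  move=> j hj.
  have -> : \sum_m w m * Q (c m) (lv m) (dv m) j = \sum_m (\prod_i lv i) * eps2 (c m) j.
    apply: eq_bigr => m _; rewrite Qeps // mulrA; congr (_ * _).
    by rewrite /w [RHS](bigD1 m) //= mulrC.
  rewrite -big_distrr /=.
  have := reindex_inj cinj (P := xpredT) (F := fun i => eps2 i j) (op := +%R) (x := 0).
  by move=> <-; rewrite sum_eps2 // mulr0.
have hz : \sum_m w m * dv m = \sum_k dv k * \prod_(m | m != k) lv m.
  by apply: eq_bigr => m _; rewrite mulrC.
have e := Gcore h0 hz cinj'.
have w0 : w ord0 != 0.
  by rewrite /w prodf_seq_neq0; apply/allP => x _; apply/implyP => _; exact: lv0.
rewrite /w prod_lift in e w0.
move: e; rewrite normrM mulrC; apply: mulIf; by rewrite normr_eq0.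
Qed.

Lemma G2 r (c : 'I_r.+1 -> 'I_r.+1) lv dv k1 k2 : k1 != k2 -> c k1 = c k2 ->
  injective (fun k => c (lift k2 k)) -> lv k1 != 0 ->
  `|\det (Tm c lv dv)| =
    `|lv k1 * dv k2 - lv k2 * dv k1| * `|\prod_(m | (m != k2) && (m != k1)) lv m|.
Proof.
move=> k12 ck cinj lv0.
pose w m := if m == k2 then lv k1 else if m == k1 then - lv k2 else 0.
have sum2 : forall F : 'I_r.+1 -> int, \sum_m w m * F m = lv k1 * F k2 - lv k2 * F k1.
  move=> F; rewrite (bigD1 k2) //= (bigD1 k1) /=; last by rewrite k12.
  rewrite big1 ?addr0; last first.
    move=> m /andP [h2 h1]; rewrite /w (negbTE h2) (negbTE h1); exact: mul0r.
  by rewrite /w eqxx (negbTE k12) eqxx mulNr.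
have h0 : forall j, j != ord_max -> \sum_m w m * Q (c m) (lv m) (dv m) j = 0.
  by move=> j hj; rewrite sum2 !Qeps // ck; ring.
have hz : \sum_m w m * dv m = lv k1 * dv k2 - lv k2 * dv k1 by rewrite sum2.
have e := Gcore h0 hz cinj.
move: e; rewrite -prod_lift (bigD1 k1) //= /w eqxx normrM [X in _ = X]mulrC normrM.
rewrite -[X in _ = X]mulrA => /(mulfI _) -> //; [exact: mulrC | by rewrite normr_eq0].
Qed.

Lemma SI r (b : 'I_r.+1) (F : 'I_r.+1 -> int) : b != ord0 ->
  \sum_a ((val b == (val a).+1)%:R : int) * F a = F (inord (val b).-1).
Proof.
move=> b0.
have bp : (0 < val b)%N by rewrite lt0n; apply: contra b0 => /eqP e; apply/eqP/val_inj.
have vi : val (inord (val b).-1 : 'I_r.+1) = (val b).-1.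
  apply: inordK; have : (val b < r.+1)%N := ltn_ord b; lia.
rewrite (bigD1 (inord (val b).-1)) //= vi prednK // eqxx mul1r big1 ?addr0 //.
move=> a ha; case: eqP => [e|_]; last by rewrite mul0r.
by case/negP: ha; apply/eqP/val_inj; rewrite vi; move: e => /= ->.
Qed.

Lemma SI0 r (b : 'I_r.+1) (F : 'I_r.+1 -> int) : b = ord0 ->
  \sum_a ((val b == (val a).+1)%:R : int) * F a = 0.
Proof. by move=> ->; apply: big1 => a _; rewrite mul0r. Qed.

Lemma Qb r (i b : 'I_r.+1) x y : b != ord0 -> i != b ->
  Q i x y (inord (val b).-1) = if i == ord0 then - x else 0.
Proof.
move=> b0 ib.
have bp : (0 < val b)%N by rewrite lt0n; apply: contra b0 => /eqP e; apply/eqP/val_inj.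
have vi : val (inord (val b).-1 : 'I_r.+1) = (val b).-1.
  apply: inordK; have : (val b < r.+1)%N := ltn_ord b; lia.
rewrite /Q.
have -> : (inord (val b).-1 == ord_max :> 'I_r.+1) = false.
  apply/negbTE; rewrite -(inj_eq val_inj) vi /=; have : (b < r.+1)%N := ltn_ord b; move: bp => /= bp; lia.
case: (i == ord0) => //; rewrite vi prednK //.
by rewrite (inj_eq val_inj) (negbTE ib).
Qed.

Lemma G0 r (c : 'I_r.+1 -> 'I_r.+1) lv dv (p q : 'I_r.+1) : q != ord0 -> p != q ->
  (forall k, c k != p) -> (forall k, c k != q) -> \det (Tm c lv dv) = 0.
Proof.
move=> q0 pq cp cq.
rewrite -det_tr; apply/eqP/det0P.
exists (\row_a ((val q == (val a).+1)%:R - (val p == (val a).+1)%:R : int)).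
  apply/negP => /eqP/rowP/(_ (inord (val q).-1)); rewrite !mxE.
  have qp : (0 < val q)%N by rewrite lt0n; apply: contra q0 => /eqP e; apply/eqP/val_inj.
  have vi : val (inord (val q).-1 : 'I_r.+1) = (val q).-1.
    apply: inordK; have : (val q < r.+1)%N := ltn_ord q; lia.
  rewrite vi prednK // eqxx.
  have -> : (val p == val q) = false by apply/negbTE; rewrite (inj_eq val_inj).
  by [].
apply/rowP => k; rewrite !mxE.
under eq_bigr => a _ do rewrite !mxE mulrBl.
rewrite sumrB SI // Qb //.
case: (eqVneq p ord0) => [p0|p0].
  by rewrite SI0 // subr0; move: (cp k); rewrite p0 => /negbTE ->.
by rewrite SI // Qb // subrr.
Qed.

End Helpers.

Theorem lemma4p6 (r : nat) (n : 'I_r.+1 -> nat)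
  (l d : forall i : 'I_r.+1, 'I_(n i) -> int) (S : {set bool})
  (hr : (1 <= r)%N)
  (hn : forall i, (1 <= n i)%N)
  (hl : forall i j, 1 <= l i j)
  (hcop : forall i j, coprimez (l i j) (d i j))
  (hdec : forall i (j j' : 'I_(n i)), (j < j')%N ->
     (d i j')%:~R / (l i j')%:~R < (d i j)%:~R / (l i j)%:~R :> rat)
  (A : {set colT n})
  (hAF : A \subset Fset n S)
  (hcard : #|A| = r.+1)
  (hdet : \det (PA l d A) != 0)
  (hAF' : A :&: Fprime n S = set0) :
  ((forall i, #|A :&: Fblock n i| = 1%N) /\
     exists j : forall i : 'I_r.+1, 'I_(n i),
       `|\det (PA l d A)| = `|mu l d j|)
  \/
  (exists i0 i1 : 'I_r.+1,
     [/\ #|A :&: Fblock n i0| = 2%N, #|A :&: Fblock n i1| = 0%N,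
         (forall i, i != i0 -> i != i1 -> #|A :&: Fblock n i| = 1%N) &
         exists (j : forall i : 'I_r.+1, 'I_(n i)) (j' : 'I_(n i0)),
           `|\det (PA l d A)| =
             `|nu l d (j i0) j'| * \prod_(i < r.+1 | (i != i0) && (i != i1)) l i (j i)]).
Proof.
have allinl : forall y, y \in A -> exists p, y = inl p.
  move=> [p|b] hy; first by exists p.
  exfalso; have : inr b \in A :&: Fprime n S.
    rewrite inE hy /= /Fprime inE.
    by move/subsetP: hAF => /(_ _ hy); rewrite /Fset inE.
  by rewrite hAF' inE.
have szA : size (enum A) = r.+1 by rewrite -cardE hcard.
pose x (k : 'I_r.+1) := nth (inr true) (enum A) k.
have xA : forall k, x k \in A by move=> k; rewrite -mem_enum; apply: mem_nth; rewrite szA.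
have xinj : injective x.
  move=> k1 k2 /eqP; rewrite /x nth_uniq ?szA // ?enum_uniq // => /eqP; exact: val_inj.
pose c k := if x k is inl p then tag p else ord0.
pose lv k := if x k is inl p then l (tag p) (tagged p) else 0.
pose dv k := if x k is inl p then d (tag p) (tagged p) else 0.
pose jv k : nat := if x k is inl p then val (tagged p) else 0%N.
have PAT : PA l d A = (Tm c lv dv)^T.
  apply/matrixP => a k; rewrite !mxE /Pcol /Q /c /lv /dv /x.
  by case: (allinl _ (xA k)) => p; rewrite /x => ->.
have hdetT : \det (PA l d A) = \det (Tm c lv dv) by rewrite PAT det_tr.
rewrite hdetT in hdet *.
have lvpos : forall k, 0 < lv k.
  by move=> k; rewrite /lv; case: (allinl _ (xA k)) => p ->; apply: lt_le_trans (hl _ _).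
have lv0 : forall k, lv k != 0 by move=> k; rewrite gt_eqF.
have hjv : forall k, (jv k < n (c k))%N.
  move=> k; rewrite /jv /c; case: (allinl _ (xA k)) => p ->; exact: ltn_ord.
have jgen : forall k (y : 'I_(n (c k))), val y = jv k -> l (c k) y = lv k /\ d (c k) y = dv k.
  move=> k; rewrite /c /jv /lv /dv; case: (allinl _ (xA k)) => p -> y /= vy.
  by have -> : y = tagged p by apply: val_inj.
pose N i := #|[set k | c k == i]|.
have NA : forall i, #|A :&: Fblock n i| = N i.
  move=> i; rewrite /N -(card_imset _ xinj); apply: eq_card => y; rewrite !inE.
  apply/andP/imsetP.
  - move=> [hy hb]; have yin : y \in enum A by rewrite mem_enum.
    have hk : (index y (enum A) < r.+1)%N by rewrite -szA index_mem.
    exists (Ordinal hk); last by rewrite /x /= nth_index.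
    rewrite inE /c /x /= nth_index //; move: hb; by case: y {hy yin hk}.
  - move=> [k]; rewrite inE => hk ->; split; first exact: xA.
    by case: (allinl _ (xA k)) => p e; move: hk; rewrite /c e.
have sumN : (\sum_i N i = r.+1)%N.
  rewrite -[RHS]card_ord -sum1_card /N.
  under eq_bigr => i _ do rewrite -sum1dep_card big_mkcond /=.
  rewrite exchange_big /=; apply: eq_bigr => k _.
  by rewrite -big_mkcond /= (big_pred1 (c k)) // => i; rewrite eq_sym.
have cz : forall i, N i = 0%N -> forall k, c k != i.
  move=> i hi k; apply/negP => /eqP e.
  by move: hi; rewrite /N => /card0_eq/(_ k); rewrite !inE e eqxx.
have Z2 : forall p q, N p = 0%N -> N q = 0%N -> p = q.
  move=> p q hp hq; apply/eqP; apply/negPn/negP => pq.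
  case: (eqVneq q ord0) => [q0|q0].
    have p0 : p != ord0 by rewrite -q0.
    by move: hdet; rewrite (G0 _ _ p0 _ (cz _ hq) (cz _ hp)) ?eqxx // eq_sym.
  by move: hdet; rewrite (G0 _ _ q0 pq (cz _ hp) (cz _ hq)) eqxx.
pose j (i : 'I_r.+1) : 'I_(n i) :=
  insubd (Ordinal (hn i)) (if [pick k | c k == i] is Some k then jv k else 0%N).
have hj1 : forall m, N (c m) = 1%N -> val (j (c m)) = jv m.
  move=> m hm; rewrite /j; case: pickP => [k' /eqP e | none]; last first.
    by have := none m; rewrite eqxx.
  have -> : k' = m.
    have : (N (c m) <= 1)%N by rewrite hm.
    by move/card_le1_eqP; apply; rewrite inE ?e eqxx.
  by rewrite val_insubd hjv.
have pos0 : forall i, i \in [set: 'I_r.+1] -> True by [].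
case: (boolP [exists i, N i == 0%N]) => [/existsP [i1 /eqP hi1] | /existsPn hnz].
  have hpos : forall i, i != i1 -> (0 < N i)%N.
    by move=> i hi; rewrite lt0n; apply/eqP => h; move: hi; rewrite (Z2 _ _ h hi1) eqxx.
  have sum1r : (\sum_(i | i != i1) 1 = r)%N.
    rewrite sum1dep_card -[RHS]/(r.+1.-1) -[in RHS](card_ord r.+1) -(cardsC1 i1).
    by apply: eq_card => i; rewrite !inE.
  have hs1 : (\sum_(i | i != i1) (N i).-1 == 1)%N.
    have e1 : (\sum_(i | i != i1) N i = \sum_(i | i != i1) ((N i).-1 + 1))%N.
      by apply: eq_bigr => i hi; rewrite addn1 prednK // hpos.
    move: sumN; rewrite (bigD1 i1) //= hi1 add0n e1 big_split /= sum1r.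
    by move=> h; apply/eqP; lia.
  case/sum_nat_eq1: hs1 => i0 [i0i1 Ni0 Noth].
  have N2 : N i0 = 2%N by have := hpos _ i0i1; lia.
  have Nother : forall i, i != i0 -> i != i1 -> N i = 1%N.
    by move=> i h0 h1; have := Noth _ h0 h1; have := hpos _ h1; lia.
  have [k1 ck1 pk1] : exists2 k1, c k1 == i0 & [pick k | c k == i0] = Some k1.
    case: pickP => [k1 h|none]; first by exists k1.
    move: N2; rewrite /N; have -> : [set k | c k == i0] = set0 by apply/setP => k; rewrite !inE none.
    by rewrite cards0.
  move/eqP: ck1 => ck1.
  have [k2 [ck2 k21 only]] : exists k2, [/\ c k2 = i0, k2 != k1 &
      forall k, c k = i0 -> k = k1 \/ k = k2].
    have : (N i0 == 2)%N by rewrite N2.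
    case/cards2P => a [b [ab hs]].
    have mem : forall k, (c k == i0) = (k \in [set a; b]) by move=> k; rewrite -hs inE.
    have := mem k1; rewrite ck1 eqxx !inE => /esym/orP [/eqP ek|/eqP ek].
      exists b; split.
      - by apply/eqP; rewrite mem !inE eqxx orbT.
      - by rewrite ek eq_sym.
      - by move=> k /eqP; rewrite mem !inE ek => /orP [/eqP ->|/eqP ->]; auto.
    exists a; split.
    - by apply/eqP; rewrite mem !inE eqxx.
    - by rewrite ek.
    - by move=> k /eqP; rewrite mem !inE ek => /orP [/eqP ->|/eqP ->]; auto.
  have c12 : k1 != k2 by rewrite eq_sym.
  have cinj2 : injective (fun k => c (lift k2 k)).
    move=> a b /= e; apply: (@lift_inj _ k2); apply/eqP/negP => nab.
    case: (eqVneq (c (lift k2 a)) i0) => [ea|na].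
      have ea' := ea; rewrite e in ea'.
      case: (only _ ea) => ha; last by move: (neq_lift k2 a); rewrite ha eqxx.
      case: (only _ ea') => hb; last by move: (neq_lift k2 b); rewrite hb eqxx.
      by move: nab; rewrite ha hb eqxx.
    have n1 : c (lift k2 a) != i1 by apply: cz.
    have : (N (c (lift k2 a)) <= 1)%N by rewrite Nother.
    move/card_le1_eqP => h; move: nab; rewrite (h (lift k2 a) (lift k2 b)) ?eqxx //.
      by rewrite inE.
    by rewrite inE e.
  right; exists i0, i1; split.
  - by rewrite NA.
  - by rewrite NA.
  - by move=> i h0 h1; rewrite NA Nother.
  pose j' : 'I_(n i0) := insubd (Ordinal (hn i0)) (jv k2).
  exists j, j'.
  have ck12 : c k1 = c k2 by rewrite ck1 ck2.
  rewrite (@G2 _ c lv dv k1 k2 c12 ck12 cinj2 (lv0 k1)).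
  have vj1 : val (j (c k1)) = jv k1.
    have := hjv k1; rewrite ck1 /j pk1 => h; by rewrite val_insubd h.
  have [l1 d1] := jgen k1 _ vj1.
  rewrite ck1 in l1 d1.
  have [l2 d2] : l i0 j' = lv k2 /\ d i0 j' = dv k2.
    have := jgen k2; rewrite ck2 => /(_ j'); apply.
    by rewrite /j' val_insubd; have := hjv k2; rewrite ck2 => ->.
  have -> : nu l d (j i0) j' = lv k1 * dv k2 - lv k2 * dv k1 by rewrite /nu l1 d1 l2 d2.
  congr (_ * _).
  rewrite ger0_norm; last by apply: prodr_ge0 => m _; apply: ltW.
  have cinjk2 : forall a b, a != k2 -> b != k2 -> c a = c b -> a = b.
    move=> a b ha hb e; apply/eqP/negP => nab.
    case: (eqVneq (c a) i0) => [ea|na].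
      have ea' := ea; rewrite e in ea'.
      case: (only _ ea) => ha'; last by move: ha; rewrite ha' eqxx.
      case: (only _ ea') => hb'; last by move: hb; rewrite hb' eqxx.
      by move: nab; rewrite ha' hb' eqxx.
    have n1 : c a != i1 by apply: cz.
    have : (N (c a) <= 1)%N by rewrite Nother.
    move/card_le1_eqP => h; move: nab; rewrite (h a b) ?eqxx //.
      by rewrite inE.
    by rewrite inE e.
  pose sg m := if m == k2 then i1 else c m.
  have sginj : injective sg.
    move=> a b; rewrite /sg; case: (eqVneq a k2) => [->|ha]; case: (eqVneq b k2) => [->|hb] //.
    - by move=> e; move: (cz _ hi1 b); rewrite e eqxx.
    - by move=> e; move: (cz _ hi1 a); rewrite e eqxx.
    - exact: cinjk2.
  rewrite [RHS](reindex_inj sginj) /=; apply: eq_big => [m|m /andP [h2 h1]].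
    rewrite /sg; case: (eqVneq m k2) => [_|h2] /=; first by rewrite eqxx andbF.
    rewrite (cz _ hi1) andbT; congr negb; apply/eqP/eqP => [->|h]; first exact: ck1.
    by case: (only _ h) => // e; move: h2; rewrite e eqxx.
  rewrite /sg (negbTE h2).
  have Nm : N (c m) = 1%N.
    apply: Nother; last exact: cz.
    by apply/eqP => h; case: (only _ h) => e; [move: h1 | move: h2]; rewrite e eqxx.
  by have [-> _] := jgen m _ (hj1 m Nm).
have N1 : forall i, N i = 1%N.
  have hsplit : (\sum_i N i = \sum_i (N i).-1 + r.+1)%N.
    have -> : (\sum_i N i = \sum_i ((N i).-1 + 1))%N.
      apply: eq_bigr => i _; rewrite addn1 prednK // lt0n; exact: hnz.
    by rewrite big_split /= sum1_card card_ord.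
  have : (\sum_i (N i).-1 == 0)%N by apply/eqP; move: hsplit; rewrite sumN; lia.
  rewrite sum_nat_eq0 => /forallP h i; have := h i; have := hnz i; lia.
have cinj : injective c.
  move=> k1 k2 e; have : (N (c k1) <= 1)%N by rewrite N1.
  by move/card_le1_eqP; apply; rewrite inE ?e eqxx.
left; split; first by move=> i; rewrite NA N1.
exists j; rewrite G1 //; congr `|_|.
rewrite /mu [RHS](reindex_inj cinj) /=; apply: eq_bigr => k _.
rewrite [in RHS](reindex_inj cinj (P := fun i => i != c k)) /=.
have [_ ->] := jgen k _ (hj1 k (N1 _)); congr (_ * _).
apply: eq_big => [m|m _]; first by rewrite (inj_eq cinj).
by have [-> _] := jgen m _ (hj1 m (N1 _)).
Qed.
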